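(* Let $m\ge 2$ be an integer. If $m$ is not a power of $2$, then the $m$-element subsets of a $2m$-element set $X$ can be coloured Red and Blue so that (i) complementary $m$-sets (i.e. $A$ and $X\setminus A$) receive distinct colours, and (ii) every point of $X$ is contained in the same number of Red sets as Blue sets. If $m$ is a power of $2$, then there is a Red–Blue colouring of the $m$-subsets of $X$ satisfying (i) such that for $m/2$ of the points of $X$, the number of Red sets containing the point exceeds the number of Blue sets containing it by $3$, and for the remaining $3m/2$ points, the number of Blue sets containing the point exceeds the number of Red sets containing it by $1$. *)

(* Defs.v *)
From mathcomp Require Import all_boot all_order all_algebra.
Set Implicit Arguments. Unset Strict Implicit. Unset Printing Implicit Defensive.

(* A Red-Blue colouring of subsets: c A = true means A is Red, false Blue.
   Only its values on m-subsets matter. *)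

Definition red_deg (X : finType) (m : nat) (c : {set X} -> bool) (x : X) : nat :=
  #|[set A : {set X} | (#|A| == m) && (x \in A) && c A]|.

Definition blue_deg (X : finType) (m : nat) (c : {set X} -> bool) (x : X) : nat :=
  #|[set A : {set X} | (#|A| == m) && (x \in A) && ~~ c A]|.

Definition antipodal (X : finType) (m : nat) (c : {set X} -> bool) : Prop :=
  forall A : {set X}, #|A| = m -> c (~: A) <> c A.

Definition is_pow2 (m : nat) : Prop := exists k : nat, m = 2 ^ k.

(* Main.v *)
Require Import Defs.
From mathcomp Require Import all_boot all_order all_algebra.
From mathcomp Require Import zify.
Import GRing.Theory.

Lemma bin_even_par a : forall b,
  odd 'C(a.*2, b.*2) = odd 'C(a, b) /\ ~~ odd 'C(a.*2, (b.*2).+1).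
Proof.
elim: a => [|a IH] b.
  by case: b => [|b].
case: b => [|b].
  rewrite bin0 bin0 /=; split => //.
  by rewrite bin1 doubleS /= odd_double.
change (a.+1).*2 with (a.*2).+2; change (b.+1).*2 with (b.*2).+2.
have [h1 h2] := IH b; have [h3 h4] := IH b.+1.
change (b.+1).*2 with (b.*2).+2 in h3; change (b.+1).*2 with (b.*2).+2 in h4.
rewrite !binS.
split.
  rewrite !oddD h1 h3 (negbTE h2) addbF addFb //.
by rewrite !oddD (negbTE h2) (negbTE h4) addbF addFb addbb.
Qed.

Lemma bin_odd_par a b : odd 'C(a.*2.+1, b.*2.+1) = odd 'C(a, b).
Proof.
rewrite binS oddD.
have [h1 h2] := bin_even_par a b.
by rewrite h1 (negbTE h2).
Qed.

Lemma bin_odd_par0 a b : odd 'C(a.*2.+1, b.*2) = odd 'C(a, b).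
Proof.
case: b => [|b]; first by rewrite !bin0.
change (b.+1).*2 with (b.*2).+2.
rewrite binS oddD.
have [h1 _] := bin_even_par a b.+1.
have [_ h2] := bin_even_par a b.
change (b.+1).*2 with (b.*2).+2 in h1.
by rewrite h1 (negbTE h2) addbF.
Qed.

Lemma pow2_double r : is_pow2 r.*2 <-> is_pow2 r.
Proof.
split.
  case=> [[|k]] /= h.
    by move: (odd_double r); rewrite h.
  exists k; move: h; rewrite expnS -muln2; lia.
case=> k ->; exists k.+1; rewrite expnS -muln2; lia.
Qed.

Lemma pow2_odd r : is_pow2 r.*2.+1 -> r = 0.
Proof.
case=> [[|k]] /=.
  by case: r.
rewrite expnS => /(congr1 odd); rewrite /= odd_double oddM /=.
done.
Qed.

Lemma central_par m : 0 < m -> (odd 'C(m.*2.-1, m.-1) <-> is_pow2 m).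
Proof.
elim/ltn_ind: m => m IH m0.
case/boolP: (odd m) => hm.
  have [r ->] : exists r, m = r.*2.+1.
    by exists m./2; rewrite -[LHS](odd_double_half m) hm add1n.
  case: r IH m0 hm => [|r] IH _ _.
    split=> _ //; by exists 0.
  have -> : (r.+1.*2.+1).*2.-1 = (r.+1.*2).*2.+1 by rewrite !doubleS.
  rewrite /= bin_odd_par0.
  have -> : 'C(r.+1.*2, r.+1) = 'C(r.*2.+1, r) * 2.
    rewrite doubleS binS.
    have e : 'C(r.*2.+1, r.+1) = 'C(r.*2.+1, r).
      rewrite -bin_sub; last by lia.
      by congr 'C(_, _); lia.
    by rewrite e addnn muln2.
  rewrite oddM andbF; split => //.
  by move/pow2_odd.
have [r mE] : exists r, m = r.*2.
  by exists m./2; rewrite -[LHS](odd_double_half m) (negbTE hm) add0n.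
have r0 : 0 < r by lia.
rewrite mE (pow2_double r).
rewrite -(IH r) //; last by lia.
case: r r0 {IH mE m0 hm} => [|r] // _.
have -> : (r.+1.*2).*2.-1 = (r.*2.+1).*2.+1 by rewrite !doubleS.
have -> : (r.+1.*2).-1 = r.*2.+1 by rewrite doubleS.
by rewrite bin_odd_par.
Qed.

Section Transport.
Variables (X X' : finType) (h : X -> X') (hi : X' -> X).
Hypotheses (hK : cancel h hi) (hK' : cancel hi h).

Let hinj : injective h := can_inj hK.

Lemma imsetK' (A' : {set X'}) : h @: (hi @: A') = A'.
Proof. by rewrite -imset_comp (eq_imset _ hK') imset_id. Qed.

Lemma card_sets_transport (Q : {set X'} -> bool) :
  #|[set A : {set X} | Q (h @: A)]| = #|[set A' | Q A']|.
Proof.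
rewrite -(card_imset _ (imset_inj hinj)); apply: eq_card => A'.
rewrite [in RHS]inE; apply/imsetP/idP.
  by case=> A; rewrite inE => qa ->.
by move=> qa; exists (hi @: A'); rewrite ?inE imsetK'.
Qed.

Lemma imsetC_tr (A : {set X}) : h @: (~: A) = ~: (h @: A).
Proof.
apply/setP => y; rewrite -[y]hK' (mem_imset _ _ hinj) !in_setC (mem_imset _ _ hinj); done.
Qed.

Variables (m : nat) (c' : {set X'} -> bool).
Definition ctr (A : {set X}) := c' (h @: A).

Lemma antipodal_tr : antipodal m c' -> antipodal m ctr.
Proof.
move=> ap A hA; rewrite /ctr imsetC_tr; apply: ap.
by rewrite card_imset.
Qed.

Lemma red_tr x : red_deg m ctr x = red_deg m c' (h x).
Proof.
rewrite /red_deg -card_sets_transport; apply: eq_card => A.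
by rewrite !inE card_imset // mem_imset.
Qed.

Lemma blue_tr x : blue_deg m ctr x = blue_deg m c' (h x).
Proof.
rewrite /blue_deg -card_sets_transport; apply: eq_card => A.
by rewrite !inE card_imset // mem_imset.
Qed.

Lemma card_preim_tr (P : {set X'}) : #|h @^-1: P| = #|P|.
Proof.
rewrite -(card_imset _ hinj); apply: eq_card => y.
rewrite -[y]hK' mem_imset // !inE hK'. done.
Qed.

End Transport.

Section Bij.
Variables (X X' : finType) (E : #|X| = #|X'|).
Definition bij_to (x : X) : X' := enum_val (cast_ord E (enum_rank x)).
Definition bij_from (y : X') : X := enum_val (cast_ord (esym E) (enum_rank y)).
Lemma bij_toK : cancel bij_to bij_from.
Proof. by move=> x; rewrite /bij_to /bij_from enum_valK cast_ordK enum_rankK. Qed.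
Lemma bij_fromK : cancel bij_from bij_to.
Proof. by move=> y; rewrite /bij_to /bij_from enum_valK cast_ordKV enum_rankK. Qed.
End Bij.

Lemma cnt_odd t a l :
  count (fun e => (t <= e) && odd e) (iota a l) = (a + l) %/ 2 - (maxn a t) %/ 2.
Proof.
elim: l => [|l IH]; first by rewrite addn0 /=; lia.
rewrite -addn1 iotaD count_cat IH /=.
case: (leqP t (a + l)) => /= h; case: (boolP (odd (a + l))) => /= ho; lia.
Qed.

Lemma cnt_even t a l :
  count (fun e => (t <= e) && ~~ odd e) (iota a l) = (a + l).+1 %/ 2 - (maxn a t).+1 %/ 2.
Proof.
elim: l => [|l IH]; first by rewrite addn0 /=; lia.
rewrite -addn1 iotaD count_cat IH /=.
case: (leqP t (a + l)) => /= h; case: (boolP (odd (a + l))) => /= ho; lia.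
Qed.

Definition Fw (N y e : nat) := if e <= y then y - e else y + N - e.

Lemma alpha_cnt h k y : k.+1 = h.*2 -> y < k.*2.+1 ->
  count (fun e => (Fw k.*2.+1 y e < k) && odd e) (iota 0 k.*2.+1)
  = if odd y && (k <= y) then h else h.-1.
Proof.
move=> hk hy.
have -> : k.*2.+1 = y.+1 + (k.*2.+1 - y.+1) by lia.
rewrite iotaD count_cat add0n.
rewrite (@eq_in_count _ _ (fun e => (y.+1 - k <= e) && odd e)); last first.
  move=> e; rewrite mem_iota /Fw => he.
  have -> : e <= y by lia.
  congr (_ && _); apply/idP/idP => ?; lia.
rewrite (@eq_in_count _ (fun e => (Fw _ y e < k) && odd e) (fun e => (y + k.*2.+1 + 1 - k <= e) && odd e)); last first.
  move=> e; rewrite mem_iota /Fw => he.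
  have -> : (e <= y) = false by lia.
  congr (_ && _); apply/idP/idP => ?; lia.
rewrite !cnt_odd.
case: (boolP (odd y)) => oy; case: (leqP k y) => ky /=; lia.
Qed.

Lemma beta_cnt h k y : k.+1 = h.*2 -> y < k.*2.+1 ->
  count (fun e => (Fw k.*2.+1 y e < k) && ~~ odd e) (iota 0 k.*2.+1)
  = if odd y && (k <= y) then h.-1 else h.
Proof.
move=> hk hy.
have -> : k.*2.+1 = y.+1 + (k.*2.+1 - y.+1) by lia.
rewrite iotaD count_cat add0n.
rewrite (@eq_in_count _ _ (fun e => (y.+1 - k <= e) && ~~ odd e)); last first.
  move=> e; rewrite mem_iota /Fw => he.
  have -> : e <= y by lia.
  congr (_ && _); apply/idP/idP => ?; lia.
rewrite (@eq_in_count _ (fun e => (Fw _ y e < k) && ~~ odd e) (fun e => (y + k.*2.+1 + 1 - k <= e) && ~~ odd e)); last first.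
  move=> e; rewrite mem_iota /Fw => he.
  have -> : (e <= y) = false by lia.
  congr (_ && _); apply/idP/idP => ?; lia.
rewrite !cnt_even.
case: (boolP (odd y)) => oy; case: (leqP k y) => ky /=; lia.
Qed.

Lemma card_set_sum (T : finType) (P : pred T) : #|[set x | P x]| = (\sum_(x : T) P x)%N.
Proof.
rewrite -sum1_card big_mkcond /=; apply: eq_bigr => x _; rewrite inE; by case: (P x).
Qed.

Section Cyc.
Local Open Scope ring_scope.
Variable k : nat.
Local Notation N := (k.*2).+1.
Local Notation Y := 'I_N.
Implicit Types (A B : {set Y}) (e x : Y).

Definition tr (A : {set Y}) (e : Y) : {set Y} := [set x | x - e \in A].
Definition ssum (A : {set Y}) : Y := \sum_(a in A) a.
Definition dd (A : {set Y}) : Y := - (ssum A *+ 2).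
Definition nrm (A : {set Y}) := tr A (- dd A).
Definition KK := [set A : {set Y} | #|A| == k].
Definition Z0 := [set A in KK | dd A == 0].

Lemma in_tr x A e : (x \in tr A e) = (x - e \in A).
Proof. by rewrite inE. Qed.

Lemma card_tr A e : #|tr A e| = #|A|.
Proof.
have -> : tr A e = (fun x => x - e) @^-1: A by apply/setP => x; rewrite !inE.
by apply: card_preimset => x y /addIr.
Qed.

Lemma tr_tr A e e' : tr (tr A e) e' = tr A (e + e').
Proof. by apply/setP => x; rewrite !in_tr opprD addrA [_ - e' - e]addrAC. Qed.

Lemma tr0 A : tr A 0 = A.
Proof. by apply/setP => x; rewrite in_tr subr0. Qed.

Lemma tr_inj e : injective (fun A => tr A e).
Proof. by move=> A B /= /(congr1 (fun C => tr C (- e))); rewrite !tr_tr subrr !tr0. Qed.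

Lemma ssum_tr A e : ssum (tr A e) = ssum A + e *+ #|A|.
Proof.
rewrite /ssum (reindex_inj (addIr e)) /=.
rewrite (eq_bigl (fun a => a \in A)); last by move=> a; rewrite in_tr addrK.
by rewrite big_split /= sumr_const.
Qed.

Lemma mulrnN (x : Y) : x *+ N = 0.
Proof. by apply: val_inj; rewrite Zp_mulrn /= modnMl. Qed.

Lemma dd_tr A e : #|A| = k -> dd (tr A e) = dd A + e.
Proof.
move=> hA; rewrite /dd ssum_tr hA mulrnDl opprD; congr (_ + _).
  have h : e + e *+ k.*2 = 0 by rewrite -mulrS mulrnN.
  rewrite -mulrnA muln2 -[e in RHS]opprK; congr (- _); apply/eqP.
  by rewrite -addr_eq0 addrC h.
Qed.

Lemma nrm_tr A e : #|A| = k -> nrm (tr A e) = nrm A.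
Proof. by move=> hA; rewrite /nrm dd_tr // tr_tr opprD addrCA subrr addr0. Qed.

Lemma card_nrm A : #|nrm A| = #|A|.
Proof. exact: card_tr. Qed.

Lemma dd_nrm A : #|A| = k -> dd (nrm A) = 0.
Proof. by move=> hA; rewrite /nrm dd_tr // addrN. Qed.

Lemma nrm_Z0 A : A \in KK -> nrm A \in Z0.
Proof.
rewrite inE => /eqP hA.
by rewrite !inE card_nrm hA eqxx /= dd_nrm.
Qed.

Lemma tr_nrm A : tr (nrm A) (dd A) = A.
Proof. by rewrite /nrm tr_tr addNr tr0. Qed.

Lemma Z0_nrm B : B \in Z0 -> nrm B = B.
Proof. by rewrite !inE => /andP[_ /eqP h]; rewrite /nrm h oppr0 tr0. Qed.

Lemma Z0_K B : B \in Z0 -> B \in KK.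
Proof. by rewrite !inE => /andP[]. Qed.

Lemma count_orbits (S : {set {set Y}}) : S \subset Z0 ->
  #|[set A in KK | nrm A \in S]| = (N * #|S|)%N.
Proof.
move=> sS.
have -> : [set A in KK | nrm A \in S] =
          (fun p : Y * {set Y} => tr p.2 p.1) @: (setX [set: Y] S).
  apply/setP => A; rewrite inE; apply/andP/imsetP.
    case=> hK hS; exists (dd A, nrm A); first by rewrite !inE hS.
    by rewrite /= tr_nrm.
  case=> [[e B]]; rewrite !inE /= => hB ->.
  have hBZ : B \in Z0 by apply: (subsetP sS).
  have /Z0_K := hBZ; rewrite inE => /eqP hk.
  by rewrite card_tr hk eqxx nrm_tr // Z0_nrm.
rewrite card_in_imset; first by rewrite cardsX cardsT card_ord.
move=> [e B] [e' B']; rewrite !inE /= => hB hB' h.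
have hBZ : B \in Z0 by apply: (subsetP sS).
have hBZ' : B' \in Z0 by apply: (subsetP sS).
have /Z0_K := hBZ; rewrite inE => /eqP hk.
have /Z0_K := hBZ'; rewrite inE => /eqP hk'.
have ee : e = e'.
  have := congr1 dd h; rewrite !dd_tr //.
  move: hBZ hBZ'; rewrite !inE => /andP[_ /eqP ->] /andP[_ /eqP ->].
  by rewrite !add0r.
by subst e'; rewrite (@tr_inj e _ _ h).
Qed.


Lemma sum_mem (A : {set Y}) : (\sum_(y : Y) (y \in A))%N = #|A|.
Proof.
rewrite -card_set_sum; apply: eq_card => y; by rewrite inE.
Qed.

Section Inv.
Variable Q : {set Y} -> bool.
Hypothesis HQ : forall A e, A \in KK -> Q (tr A e) = Q A.

Lemma inv_count0 y :
  #|[set A in KK | (y \in A) && Q A]| = #|[set A in KK | ((0%R:Y) \in A) && Q A]|.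
Proof.
rewrite -[RHS](card_imset _ (@tr_inj y)); apply: eq_card => A'.
rewrite [in LHS]inE; apply/idP/imsetP.
  case/andP=> hK /andP[hy hQ]; exists (tr A' (-y)); last by rewrite tr_tr addNr tr0.
  have hK' : tr A' (- y) \in KK by rewrite inE card_tr; move: hK; rewrite inE.
  by rewrite inE hK' /= in_tr sub0r opprK hy HQ.
case=> A; rewrite inE => /andP[hK /andP[h0 hQ]] ->.
have hK' : tr A y \in KK by rewrite inE card_tr; move: hK; rewrite inE.
by rewrite hK' /= in_tr subrr h0 HQ.
Qed.

Lemma inv_count y :
  (#|[set A in KK | (y \in A) && Q A]| * N = k * #|[set A in KK | Q A]|)%N.
Proof.
have e1 : (\sum_(z : Y) #|[set A in KK | (z \in A) && Q A]| = N * #|[set A in KK | ((0%R:Y) \in A) && Q A]|)%N.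
  rewrite (eq_bigr (fun _ => #|[set A in KK | ((0%R:Y) \in A) && Q A]|)); last by move=> z _; rewrite inv_count0.
  by rewrite sum_nat_const cardT size_enum_ord.
have e2 : (\sum_(z : Y) #|[set A in KK | (z \in A) && Q A]| = k * #|[set A in KK | Q A]|)%N.
  rewrite (eq_bigr (fun z => \sum_(A : {set Y}) ((A \in KK) && ((z \in A) && Q A)))%N); last by move=> z _; rewrite card_set_sum.
  rewrite exchange_big /= card_set_sum big_distrr /=.
  apply: eq_bigr => A _.
  case: (boolP (A \in KK)) => hK /=; last by rewrite muln0 big1.
  case: (Q A); last by rewrite muln0 big1 // => z _; rewrite andbF.
  rewrite muln1 (eq_bigr (fun z => nat_of_bool (z \in A))); last by move=> z _; rewrite andbT.
  by rewrite sum_mem; move: hK; rewrite inE => /eqP.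
by rewrite -(inv_count0 y) in e1; rewrite mulnC -e1 e2.
Qed.

End Inv.

End Cyc.

Section Opt.
Variable k : nat.
Local Notation N := (k.*2).+1.
Local Notation Y := 'I_N.
Implicit Types (B : {set Y}) (A : {set option Y}).

Definition up B : {set option Y} := None |: (Some @: B).
Definition pre A : {set Y} := [set y | Some y \in A].

Lemma in_up_Some y B : (Some y \in up B) = (y \in B).
Proof. by rewrite !inE (mem_imset _ _ (@Some_inj _)). Qed.

Lemma None_up B : None \in up B.
Proof. by rewrite !inE. Qed.

Lemma pre_up B : pre (up B) = B.
Proof. by apply/setP => y; rewrite inE in_up_Some. Qed.

Lemma up_pre A : None \in A -> up (pre A) = A.
Proof.
move=> hN; apply/setP => [[y|]]; first by rewrite in_up_Some inE.
by rewrite None_up hN.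
Qed.

Lemma card_up B : #|up B| = #|B|.+1.
Proof.
rewrite cardsU1 card_imset; last exact: Some_inj.
have -> : None \notin Some @: B by apply/imsetP => [[y _]].
done.
Qed.

Lemma card_opt : #|{: option Y}| = (k.+1).*2.
Proof. by rewrite card_option card_ord doubleS. Qed.

Lemma up_inj : injective up.
Proof. exact: (can_inj pre_up). Qed.

Lemma split_count (F : {set option Y} -> bool) :
  #|[set A : {set option Y} | (#|A| == k.+1) && F A]| =
  (#|[set B in KK k | F (up B)]| + #|[set B in KK k | F (~: up B)]|)%N.
Proof.
rewrite -(cardsID [set A : {set option Y} | None \in A]).
congr (_ + _)%N.
  rewrite -(card_imset _ up_inj); apply: eq_card => A.
  rewrite !inE; apply/idP/imsetP.
    move=> /andP[/andP[hc hF] hN]; exists (pre A); last by rewrite up_pre.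
    have hc' : #|pre A| = k by move: hc; rewrite -{1}(up_pre _ hN) card_up => /eqP[].
    by rewrite !inE hc' eqxx /= up_pre.
  case=> B; rewrite inE => /andP[hK hF] ->.
  by rewrite card_up hF None_up !andbT; move: hK; rewrite inE => /eqP ->.
have cinj : injective (fun B => ~: up B).
  by move=> B B' /= /setC_inj /up_inj.
rewrite -(card_imset _ cinj); apply: eq_card => A.
rewrite !inE; apply/idP/imsetP.
  move=> /and3P[hN hc hF].
  have hN' : None \in ~: A by rewrite inE.
  exists (pre (~: A)); last by rewrite up_pre // setCK.
  have h := cardsC A; rewrite card_opt (eqP hc) -(up_pre _ hN') card_up in h.
  have hk : #|pre (~: A)| = k by lia.
  by rewrite !inE hk eqxx /= up_pre // setCK.
case=> B; rewrite inE => /andP[hK hF] ->.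
have hc : #|~: up B| = k.+1.
  move: hK; rewrite inE => /eqP hK.
  have := cardsC (up B); rewrite card_opt card_up hK; lia.
by rewrite hc eqxx hF /= inE None_up.
Qed.

Variable g : {set Y} -> bool.
Definition col A := if None \in A then g (pre A) else ~~ g (pre (~: A)).

Lemma col_up B : col (up B) = g B.
Proof. by rewrite /col None_up pre_up. Qed.

Lemma col_cup B : col (~: up B) = ~~ g B.
Proof. by rewrite /col inE None_up /= setCK pre_up. Qed.

Lemma antipodal_col m : antipodal m col.
Proof.
move=> A _; rewrite /col inE setCK.
by case: (None \in A) => /=; case: (g _).
Qed.

Lemma red_Some y : red_deg k.+1 col (Some y) =
  (#|[set B in KK k | (y \in B) && g B]| + #|[set B in KK k | (y \notin B) && ~~ g B]|)%N.
Proof.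
rewrite /red_deg.
have -> : [set A : {set option Y} | (#|A| == k.+1) && (Some y \in A) && col A] =
          [set A : {set option Y} | (#|A| == k.+1) && ((Some y \in A) && col A)].
  by apply/setP => A; rewrite !inE andbA.
rewrite split_count; congr (_ + _)%N; apply: eq_card => B; rewrite !inE.
  by rewrite (mem_imset _ _ (@Some_inj _)) col_up.
by rewrite (mem_imset _ _ (@Some_inj _)) col_cup.
Qed.

Lemma blue_Some y : blue_deg k.+1 col (Some y) =
  (#|[set B in KK k | (y \in B) && ~~ g B]| + #|[set B in KK k | (y \notin B) && g B]|)%N.
Proof.
rewrite /blue_deg.
have -> : [set A : {set option Y} | (#|A| == k.+1) && (Some y \in A) && ~~ col A] =
          [set A : {set option Y} | (#|A| == k.+1) && ((Some y \in A) && ~~ col A)].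
  by apply/setP => A; rewrite !inE andbA.
rewrite split_count; congr (_ + _)%N; apply: eq_card => B; rewrite !inE.
  by rewrite (mem_imset _ _ (@Some_inj _)) col_up.
by rewrite (mem_imset _ _ (@Some_inj _)) col_cup negbK.
Qed.

Lemma red_None : red_deg k.+1 col None = #|[set B in KK k | g B]|.
Proof.
rewrite /red_deg.
have -> : [set A : {set option Y} | (#|A| == k.+1) && (None \in A) && col A] =
          [set A : {set option Y} | (#|A| == k.+1) && ((None \in A) && col A)].
  by apply/setP => A; rewrite !inE andbA.
rewrite split_count.
have -> : #|[set B in KK k | (None \in ~: up B) && col (~: up B)]| = 0%N.
  by apply/eqP; rewrite cards_eq0; apply/eqP/setP => B; rewrite !inE eqxx /= andbF.
rewrite [X in _ + X]/= addn0. apply: eq_card => B. by rewrite !inE eqxx col_up.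
Qed.

Lemma blue_None : blue_deg k.+1 col None = #|[set B in KK k | ~~ g B]|.
Proof.
rewrite /blue_deg.
have -> : [set A : {set option Y} | (#|A| == k.+1) && (None \in A) && ~~ col A] =
          [set A : {set option Y} | (#|A| == k.+1) && ((None \in A) && ~~ col A)].
  by apply/setP => A; rewrite !inE andbA.
rewrite split_count.
have -> : #|[set B in KK k | (None \in ~: up B) && ~~ col (~: up B)]| = 0%N.
  by apply/eqP; rewrite cards_eq0; apply/eqP/setP => B; rewrite !inE eqxx /= andbF.
rewrite [X in _ + X]/= addn0. apply: eq_card => B. by rewrite !inE eqxx col_up.
Qed.

End Opt.

Lemma exists_subset (T : finType) (S : {set T}) l :
  l <= #|S| -> exists R : {set T}, R \subset S /\ #|R| = l.
Proof.
elim: l => [|l IH] hl; first by exists set0; rewrite sub0set cards0.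
have [R [sR cR]] := IH (ltnW hl).
have : R \proper S by rewrite properEcard sR cR hl.
case/properP=> _ [x xS xR]; exists (x |: R); split.
  by rewrite subUset sub1set xS sR.
by rewrite cardsU1 xR cR.
Qed.

Lemma card_ord_pred n (P : pred nat) : #|[set u : 'I_n | P u]| = count P (iota 0 n).
Proof.
rewrite card_set_sum -(big_mkord xpredT (fun i => nat_of_bool (P i))).
rewrite /index_iota subn0; elim: (iota 0 n) => [|a s IH]; first by rewrite big_nil.
by rewrite big_cons IH.
Qed.

Lemma count_lt t l : count (fun i => i < t) (iota 0 l) = minn t l.
Proof.
elim: l => [|l IH]; first by rewrite minn0.
rewrite -addn1 iotaD count_cat IH /= add0n; case: (ltnP l t) => h /=; lia.
Qed.

Lemma card_split (T : finType) (P Q : pred T) :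
  #|[set x | Q x]| = (#|[set x | P x && Q x]| + #|[set x | ~~ P x && Q x]|)%N.
Proof.
rewrite !card_set_sum -big_split /=; apply: eq_bigr => x _.
by case: (P x); case: (Q x).
Qed.

Lemma card_disj (T : finType) (P Q : pred T) :
  (forall x, ~~ (P x && Q x)) ->
  #|[set x | P x || Q x]| = (#|[set x | P x]| + #|[set x | Q x]|)%N.
Proof.
move=> d; rewrite !card_set_sum -big_split /=; apply: eq_bigr => x _.
by move: (d x); case: (P x); case: (Q x).
Qed.

Section Fin.
Variable k : nat.
Local Notation N := (k.*2).+1.
Local Notation Y := 'I_N.
Implicit Types (A B : {set Y}) (e y : Y).
Local Notation nrm := (@nrm k).
Local Notation tr := (@tr k).
Local Notation dd := (@dd k).
Local Notation col := (@col k).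

Lemma KK_card : #|KK k| = 'C(N, k).
Proof. by rewrite /KK card_draws card_ord. Qed.

Lemma Z0_count : (N * #|Z0 k|)%N = 'C(N, k).
Proof.
rewrite -count_orbits // -KK_card; apply: eq_card => A; rewrite inE.
by case: (boolP (A \in KK k)) => //= /nrm_Z0 ->.
Qed.

Lemma inv_nrm (S : {set {set Y}}) A e : A \in KK k -> (nrm (tr A e) \in S) = (nrm A \in S).
Proof. by rewrite inE => /eqP hA; rewrite nrm_tr. Qed.

Lemma piece_in (S : {set {set Y}}) r y : S \subset Z0 k -> #|S| = r ->
  #|[set B in KK k | (y \in B) && (nrm B \in S)]| = (k * r)%N.
Proof.
move=> sS cS.
have h := @inv_count k (fun B => nrm B \in S) (@inv_nrm S) y.
rewrite count_orbits // cS in h.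
by apply/eqP; rewrite -(eqn_pmul2r (isT : 0 < N)) h; apply/eqP; lia.
Qed.

Lemma piece_out (S : {set {set Y}}) r y : S \subset Z0 k -> #|S| = r ->
  #|[set B in KK k | (y \notin B) && (nrm B \in S)]| = (k.+1 * r)%N.
Proof.
move=> sS cS.
have h := @card_split _ (fun B : {set Y} => y \in B) (fun B => (B \in KK k) && (nrm B \in S)).
have e1 : #|[set B : {set Y} | (fun B => (B \in KK k) && (nrm B \in S)) B]| = (N * r)%N.
  by rewrite -cS -count_orbits.
have e2 : #|[set B : {set Y} | (y \in B) && ((B \in KK k) && (nrm B \in S))]| = (k * r)%N.
  rewrite -(@piece_in S r y sS cS); apply: eq_card => B; rewrite !inE.
  by case: (y \in B); case: (#|B| == k).
move: h; rewrite e1 e2 => hh.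
have hh' : (N * r = k * r + #|[set B in KK k | (y \notin B) && (nrm B \in S)]|)%N.
  rewrite hh; congr (_ + _)%N; apply: eq_card => B; rewrite !inE.
  by case: (y \in B); case: (#|B| == k).
move: hh'; lia.
Qed.

Lemma nrm_notin (R : {set {set Y}}) B : B \in KK k ->
  (nrm B \in Z0 k :\: R) = (nrm B \notin R).
Proof. by move=> hB; rewrite in_setD (@nrm_Z0 k B hB) andbT. Qed.

Lemma model_nonpow2 : ~~ odd #|Z0 k| ->
  exists g : {set Y} -> bool,
    forall x : option Y, red_deg k.+1 (col g) x = blue_deg k.+1 (col g) x.
Proof.
move=> ev.
have hl : #|Z0 k| %/ 2 <= #|Z0 k| by lia.
have [R [sR cR]] := @exists_subset _ _ _ hl.
set r := #|Z0 k| %/ 2 in cR.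
have sRc : Z0 k :\: R \subset Z0 k by apply: subsetDl.
have cRc : #|Z0 k :\: R| = r.
  have := cardsID R (Z0 k); rewrite (setIidPr sR) cR /r; lia.
exists (fun B => nrm B \in R).
have eN : forall L : {set Y} -> bool,
    #|[set B in KK k | L B && ~~ (nrm B \in R)]| =
    #|[set B in KK k | L B && (nrm B \in Z0 k :\: R)]|.
  move=> L; apply: eq_card => B; rewrite !inE.
  case: (boolP (#|B| == k)) => //= hB.
  by rewrite card_nrm (eqP hB) eqxx dd_nrm ?(eqP hB) // eqxx !andbT.
case=> [y|].
  have eN1 := eN (fun B => y \notin B); have eN2 := eN (fun B => y \in B); rewrite /= in eN1 eN2.
  rewrite red_Some blue_Some eN1 eN2.
  rewrite (@piece_in R r) // (@piece_out R r) //.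
  by rewrite (@piece_in _ r) // (@piece_out _ r).
rewrite red_None blue_None.
have -> : #|[set B in KK k | ~~ (nrm B \in R)]| = #|[set B in KK k | nrm B \in Z0 k :\: R]|.
  by have := eN xpredT; apply: etrans; apply: eq_card.
by rewrite !count_orbits // cR cRc.
Qed.

Definition JJ : {set Y} := [set u : Y | u < k].

Lemma card_J : #|JJ| = k.
Proof. by rewrite /JJ (card_ord_pred _ (fun i => i < k)) count_lt; lia. Qed.

Lemma J_KK : JJ \in KK k.
Proof. by rewrite inE card_J. Qed.

Lemma val_sub y e : val (y - e)%R = Fw N y e.
Proof.
have hy := ltn_ord y; have he := ltn_ord e.
rewrite /= /Fw modnDmr; case: leqP => h.
  have -> : (y + (N - e) = (y - e) + N)%N by lia.
  by rewrite modnDr modn_small //; lia.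
by rewrite modn_small //; lia.
Qed.

Lemma special_count (phi : Y -> bool) (L : {set Y} -> bool) :
  #|[set B in KK k | L B && ((nrm B == nrm JJ) && phi (dd B - dd JJ)%R)]| =
  #|[set e : Y | L (tr JJ e) && phi e]|.
Proof.
have tinj : injective (tr JJ).
  by move=> e e' /(congr1 dd); rewrite !dd_tr ?card_J //; apply: addrI.
rewrite -(card_imset _ tinj); apply: eq_card => B.
rewrite [in LHS]inE; apply/idP/imsetP.
  case/and3P=> hK hL /andP[/eqP hn hphi].
  have hB : tr JJ (dd B - dd JJ)%R = B.
    rewrite -[RHS](@tr_nrm k B) hn /nrm tr_tr; congr (tr JJ _).
    by rewrite addrC.
  by exists (dd B - dd JJ)%R; rewrite ?inE ?hB ?hL.
case=> e; rewrite inE => /andP[hL hphi] ->.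
rewrite inE card_tr card_J eqxx hL /= nrm_tr ?card_J // eqxx /=.
by rewrite dd_tr ?card_J // addrC addKr.
Qed.

Lemma card_odd : #|[set e : Y | odd e]| = k.
Proof.
rewrite (card_ord_pred N odd).
rewrite (@eq_count _ odd (fun i : nat => (0 <= i) && odd i)) //.
by rewrite cnt_odd; lia.
Qed.

Lemma card_even : #|[set e : Y | ~~ odd e]| = k.+1.
Proof.
rewrite (card_ord_pred N (fun i : nat => ~~ odd i)).
rewrite (@eq_count _ (fun i : nat => ~~ odd i) (fun i : nat => (0 <= i) && ~~ odd i)) //.
by rewrite cnt_even; lia.
Qed.

Lemma in_trJ y e : (y \in tr JJ e) = (Fw N y e < k).
Proof. by rewrite in_tr inE val_sub. Qed.

Lemma model_pow2 h : k.+1 = h.*2 -> odd #|Z0 k| ->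
  exists g : {set Y} -> bool, exists P : {set option Y},
    #|P| = h /\
    (forall x, x \in P -> red_deg k.+1 (col g) x = (blue_deg k.+1 (col g) x + 3)%N) /\
    (forall x, x \notin P -> blue_deg k.+1 (col g) x = (red_deg k.+1 (col g) x + 1)%N).
Proof.
move=> hk od.
set J0 := nrm JJ.
have J0Z : J0 \in Z0 k by apply: nrm_Z0 J_KK.
set Z1 := Z0 k :\ J0.
have cZ1 : #|Z0 k| = #|Z1|.+1 by rewrite (cardsD1 J0 (Z0 k)) J0Z.
have ev : ~~ odd #|Z1| by move: od; rewrite cZ1 /=; case: (odd _).
have hl : #|Z1| %/ 2 <= #|Z1| by lia.
have [R [sR cR]] := @exists_subset _ _ _ hl.
set r := #|Z1| %/ 2 in cR.
have sZ1 : Z1 \subset Z0 k by apply: subsetDl.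
have sR0 : R \subset Z0 k by apply: subset_trans sZ1.
set Rc := Z1 :\: R.
have sRc : Rc \subset Z0 k by apply: subset_trans (subsetDl _ _) sZ1.
have cRc : #|Rc| = r.
  rewrite /Rc; have := cardsID R Z1; rewrite (setIidPr sR) cR /r; lia.
have J0R : J0 \notin R.
  by apply/negP => /(subsetP sR); rewrite !inE eqxx.
set g := fun B => if nrm B == J0 then odd (dd B - dd JJ)%R else nrm B \in R.
exists g.
have eR : forall B, (nrm B == J0) -> (nrm B \in R) = false.
  by move=> B /eqP ->; apply/negbTE.
have eRc : forall B, B \in KK k -> (nrm B \in Rc) = (nrm B != J0) && (nrm B \notin R).
  move=> B hK; rewrite /Rc /Z1 !in_setD (@nrm_Z0 k B hK) andbT.
  by rewrite in_set1 andbC.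
have dec1 : forall L : {set Y} -> bool,
  #|[set B in KK k | L B && g B]| =
  (#|[set B in KK k | L B && (nrm B \in R)]| +
   #|[set B in KK k | L B && ((nrm B == J0) && odd (dd B - dd JJ)%R)]|)%N.
  move=> L; rewrite -card_disj.
    apply: eq_card => B; rewrite [LHS]inE [RHS]inE /g.
    case: (boolP (B \in KK k)) => hK //=.
    case: (boolP (nrm B == J0)) => hn; first rewrite (eR _ hn).
      by case: (L B).
    by case: (L B); case: (nrm B \in R).
  move=> B; case: (boolP (nrm B == J0)) => hn; first rewrite (eR _ hn).
    by rewrite !andbF.
  by rewrite /= !andbF.
have dec0 : forall L : {set Y} -> bool,
  #|[set B in KK k | L B && ~~ g B]| =
  (#|[set B in KK k | L B && (nrm B \in Rc)]| +
   #|[set B in KK k | L B && ((nrm B == J0) && ~~ odd (dd B - dd JJ)%R)]|)%N.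
  move=> L; rewrite -card_disj.
    apply: eq_card => B; rewrite [LHS]inE [RHS]inE /g.
    case: (boolP (B \in KK k)) => hK //=.
    rewrite (eRc _ hK).
    case: (boolP (nrm B == J0)) => hn /=; first by case: (L B).
    by case: (L B); case: (nrm B \in R).
  move=> B; case: (boolP (B \in KK k)) => hK //=.
  rewrite (eRc _ hK).
  case: (boolP (nrm B == J0)) => hn /=; first by rewrite !andbF.
  by rewrite !andbF.
have s_odd : forall L : {set Y} -> bool,
  #|[set B in KK k | L B && ((nrm B == J0) && odd (dd B - dd JJ)%R)]| =
  #|[set e : Y | L (tr JJ e) && odd e]| by move=> L; apply: special_count.
have s_even : forall L : {set Y} -> bool,
  #|[set B in KK k | L B && ((nrm B == J0) && ~~ odd (dd B - dd JJ)%R)]| =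
  #|[set e : Y | L (tr JJ e) && ~~ odd e]| by move=> L; apply: (special_count (fun e => ~~ odd e)).
have cR' : #|[set B in KK k | nrm B \in R]| = (N * r)%N by rewrite count_orbits // cR.
have cRc' : #|[set B in KK k | nrm B \in Rc]| = (N * r)%N by rewrite count_orbits // cRc.
have hN1 : #|[set B in KK k | g B]| = (N * r + k)%N.
  have := dec1 xpredT; rewrite (s_odd xpredT) /=.
  have -> : #|[set e : Y | true && odd e]| = k.
    by rewrite -[RHS]card_odd; apply: eq_card => e; rewrite !inE.
  have -> : #|[set B in KK k | true && (nrm B \in R)]| = (N * r)%N.
    by rewrite -cR'; apply: eq_card => B; rewrite !inE.
  by move=> <-; apply: eq_card => B; rewrite !inE.
have hN0 : #|[set B in KK k | ~~ g B]| = (N * r + k.+1)%N.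
  have := dec0 xpredT; rewrite (s_even xpredT) /=.
  have -> : #|[set e : Y | true && ~~ odd e]| = k.+1.
    by rewrite -[RHS]card_even; apply: eq_card => e; rewrite !inE.
  have -> : #|[set B in KK k | true && (nrm B \in Rc)]| = (N * r)%N.
    by rewrite -cRc'; apply: eq_card => B; rewrite !inE.
  by move=> <-; apply: eq_card => B; rewrite !inE.
exists (Some @: [set y : Y | odd y && (k <= y)]).
split.
  rewrite card_imset; last exact: Some_inj.
  rewrite (@eq_card _ _ [set y : Y | (k <= y) && odd y]); last by move=> y; rewrite !inE andbC.
  rewrite (card_ord_pred N (fun i : nat => (k <= i) && odd i)).
  by rewrite cnt_odd; lia.
have key : forall y : Y,
  let a := #|[set e : Y | (y \in tr JJ e) && odd e]| in
  let b := #|[set e : Y | (y \in tr JJ e) && ~~ odd e]| in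
  let a' := #|[set e : Y | (y \notin tr JJ e) && odd e]| in
  let b' := #|[set e : Y | (y \notin tr JJ e) && ~~ odd e]| in
  [/\ a = (if odd y && (k <= y) then h else h.-1),
      b = (if odd y && (k <= y) then h.-1 else h),
      (a + a')%N = k & (b + b')%N = k.+1].
  move=> y a b a' b'; split.
  - rewrite /a (@eq_card _ _ [set e : Y | (Fw N y e < k) && odd e]); last by move=> e; rewrite !inE val_sub.
    by rewrite (card_ord_pred N (fun i => (Fw N y i < k) && odd i)) (alpha_cnt _ _ _ hk (ltn_ord y)).
  - rewrite /b (@eq_card _ _ [set e : Y | (Fw N y e < k) && ~~ odd e]); last by move=> e; rewrite !inE val_sub.
    by rewrite (card_ord_pred N (fun i => (Fw N y i < k) && ~~ odd i)) (beta_cnt _ _ _ hk (ltn_ord y)).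
  - by rewrite -[RHS]card_odd (@card_split _ (fun e => y \in tr JJ e) odd).
  - by rewrite -[RHS]card_even (@card_split _ (fun e => y \in tr JJ e) (fun e => ~~ odd e)).
split.
  move=> x; case/imsetP=> y; rewrite inE => /andP[oy ky] ->.
  rewrite red_Some blue_Some.
  have d1 := dec1 (fun B => y \in B); rewrite (s_odd (fun B => y \in B)) /= in d1.
  have d1' := dec1 (fun B => y \notin B); rewrite (s_odd (fun B => y \notin B)) /= in d1'.
  have d0 := dec0 (fun B => y \in B); rewrite (s_even (fun B => y \in B)) /= in d0.
  have d0' := dec0 (fun B => y \notin B); rewrite (s_even (fun B => y \notin B)) /= in d0'.
  rewrite d1 d0' d0 d1'.
  rewrite (@piece_in R r) // (@piece_out R r) // (@piece_in Rc r) // (@piece_out Rc r) //.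
  have [ha hb haa hbb] := key y; rewrite oy ky /= in ha hb.
  move: ha hb haa hbb.
  set A1 := #|[set e : Y | (y \in tr JJ e) && odd e]|.
  set A2 := #|[set e : Y | (y \in tr JJ e) && ~~ odd e]|.
  set A3 := #|[set e : Y | (y \notin tr JJ e) && odd e]|.
  set A4 := #|[set e : Y | (y \notin tr JJ e) && ~~ odd e]|.
  lia.
move=> [y|] hy.
  have {}hy : ~~ (odd y && (k <= y)).
    by apply: contra hy => hh; apply/imsetP; exists y; rewrite ?inE.
  rewrite red_Some blue_Some.
  have d1 := dec1 (fun B => y \in B); rewrite (s_odd (fun B => y \in B)) /= in d1.
  have d1' := dec1 (fun B => y \notin B); rewrite (s_odd (fun B => y \notin B)) /= in d1'.
  have d0 := dec0 (fun B => y \in B); rewrite (s_even (fun B => y \in B)) /= in d0.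
  have d0' := dec0 (fun B => y \notin B); rewrite (s_even (fun B => y \notin B)) /= in d0'.
  rewrite d1 d0' d0 d1'.
  rewrite (@piece_in R r) // (@piece_out R r) // (@piece_in Rc r) // (@piece_out Rc r) //.
  have [ha hb haa hbb] := key y; rewrite (negbTE hy) in ha hb.
  move: ha hb haa hbb.
  set A1 := #|[set e : Y | (y \in tr JJ e) && odd e]|.
  set A2 := #|[set e : Y | (y \in tr JJ e) && ~~ odd e]|.
  set A3 := #|[set e : Y | (y \notin tr JJ e) && odd e]|.
  set A4 := #|[set e : Y | (y \notin tr JJ e) && ~~ odd e]|.
  lia.
by rewrite red_None blue_None hN1 hN0; lia.
Qed.


End Fin.

Lemma odd_Z0 k : odd #|Z0 k| = odd 'C((k.+1).*2.-1, (k.+1).-1).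
Proof.
have -> : (k.+1).*2.-1 = k.*2.+1 by rewrite doubleS.
by rewrite -Z0_count oddM /= odd_double.
Qed.

Theorem theorem1p5 (m : nat) (hm : 2 <= m) (X : finType) (hX : #|X| = 2 * m) :
  (~ is_pow2 m ->
     exists c : {set X} -> bool,
       antipodal m c /\ forall x : X, red_deg m c x = blue_deg m c x)
  /\
  (is_pow2 m ->
     exists c : {set X} -> bool,
       antipodal m c /\
       exists P : {set X},
         #|P| = m %/ 2 /\
         (forall x : X, x \in P -> red_deg m c x = blue_deg m c x + 3) /\
         (forall x : X, x \notin P -> blue_deg m c x = red_deg m c x + 1)).
Proof.
case: m hm hX => [|k] // hm hX.
have E : #|X| = #|{: option 'I_(k.*2).+1}| by rewrite card_opt hX; lia.
have hK := @bij_toK _ _ E; have hK' := @bij_fromK _ _ E.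
have cp := central_par (k.+1) (isT : 0 < k.+1).
split.
  move=> np.
  have ev : ~~ odd #|Z0 k| by rewrite odd_Z0; apply/negP => /cp.
  have [g hg] := model_nonpow2 k ev.
  exists (ctr _ _ (@bij_to _ _ E) (col k g)); split.
    exact: (antipodal_tr _ _ _ _ hK hK' (k.+1) (col k g) (@antipodal_col k g (k.+1))).
  by move=> x; rewrite (red_tr _ _ _ _ hK hK') (blue_tr _ _ _ _ hK hK') hg.
move=> p2.
have od : odd #|Z0 k| by rewrite odd_Z0; apply/cp.
have ev : ~~ odd k.+1.
  case: p2 => [[|j]] e; first by rewrite e in hm.
  by rewrite e expnS oddM.
have hk : k.+1 = (k.+1 %/ 2).*2.
  by move: ev; rewrite divn2; lia.
have [g [P' [cP [hP1 hP2]]]] := model_pow2 k _ hk od.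
exists (ctr _ _ (@bij_to _ _ E) (col k g)); split.
  exact: (antipodal_tr _ _ _ _ hK hK' (k.+1) (col k g) (@antipodal_col k g (k.+1))).
exists (@bij_to _ _ E @^-1: P'); split.
  by rewrite (card_preim_tr _ _ _ _ hK hK') cP.
split.
  move=> x; rewrite inE => hx.
  by rewrite (red_tr _ _ _ _ hK hK') (blue_tr _ _ _ _ hK hK') hP1.
move=> x; rewrite inE => hx.
by rewrite (red_tr _ _ _ _ hK hK') (blue_tr _ _ _ _ hK hK') hP2.
Qed.
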